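(* Let $P$ be a finite set of points in the plane in general position with $|P|$ even, and let $C$ be a connected component of the underlying graph of $P$ with vertex set $V(C)\subseteq P$. Then $|V(C)|$ is even and the underlying graph of the point set $V(C)$ is exactly $C$.
   Context: Points are in general position if no three are collinear. For a finite set $P$ of $n$ points in general position with $n$ even, a halving line of $P$ is a line through two points of $P$ that has exactly $(n-2)/2$ points of $P$ strictly on each side. The underlying graph of $P$ has vertex set $P$, and two points are adjacent if and only if the line through them is a halving line of $P$. *)

(* Defs.v *)
From HB Require Import structures.
From mathcomp Require Import all_boot all_order all_algebra.
Set Implicit Arguments. Unset Strict Implicit. Unset Printing Implicit Defensive.
Import Order.TTheory GRing.Theory Num.Theory.

Local Open Scope ring_scope.

Definition point (R : realFieldType) := (R * R)%type.

(* orientation determinant: > 0 iff c is strictly left of the directed line a->b,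
   < 0 iff strictly right, = 0 iff collinear *)
Definition orient (R : realFieldType) (a b c : point R) : R :=
  (b.1 - a.1) * (c.2 - a.2) - (b.2 - a.2) * (c.1 - a.1).

Definition general_position (R : realFieldType) (P : seq (point R)) : Prop :=
  forall a b c, a \in P -> b \in P -> c \in P ->
    a != b -> a != c -> b != c -> orient a b c != 0.

(* the line through a, b in P (a <> b) is a halving line of P:
   exactly (n-2)/2 points of P strictly on each side, n = size P *)
Definition halving_edge (R : realFieldType) (P : seq (point R)) : rel (point R) :=
  fun a b => [&& a \in P, b \in P, a != b,
     count (fun c => 0 < orient a b c) P == ((size P - 2) %/ 2)%N &
     count (fun c => orient a b c < 0) P == ((size P - 2) %/ 2)%N].

Definition reachable (R : realFieldType) (P : seq (point R)) (v w : point R) : Prop :=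
  exists p : seq (point R), path (halving_edge P) v p /\ last v p = w.

(* Main.v *)
Require Import Defs.
From HB Require Import structures.
From mathcomp Require Import all_boot all_order all_algebra.
From mathcomp Require Import ring lra zify.
Import Order.TTheory GRing.Theory Num.Theory.
Set Implicit Arguments. Unset Strict Implicit. Unset Printing Implicit Defensive.
Local Open Scope ring_scope.

Lemma count_split (T : Type) (p q : pred T) (s : seq T) :
  count p s = (count (fun x => p x && q x) s + count (fun x => p x && ~~ q x) s)%N.
Proof.
elim: s => //= x s ->; case: (p x); case: (q x) => /=; lia.
Qed.

Lemma count_le_in (T : eqType) (p1 p2 : pred T) (s : seq T) :
  (forall x, x \in s -> p1 x -> p2 x) -> (count p1 s <= count p2 s)%N.
Proof.
elim: s => [|y s IH] H //=.
have H' : forall x, x \in s -> p1 x -> p2 x by move=> x xs; apply: H; rewrite inE xs orbT.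
have := IH H'; have := H y (mem_head _ _).
case: (p1 y); case: (p2 y) => //= h; lia.
Qed.

Lemma count_lt (T : eqType) (p1 p2 : pred T) (s : seq T) :
  (forall x, x \in s -> p1 x -> p2 x) ->
  (exists2 x, x \in s & p2 x && ~~ p1 x) ->
  (count p1 s < count p2 s)%N.
Proof.
elim: s => [|y s IH] H [x]; first by [].
have H' : forall x, x \in s -> p1 x -> p2 x by move=> z zs; apply: H; rewrite inE zs orbT.
rewrite inE => /orP [/eqP-> | xs] /andP [h2 h1] /=.
- rewrite (negbTE h1) h2 /=. have := count_le_in H'. lia.
- have := IH H' (ex_intro2 _ _ x xs (introT andP (conj h2 h1))).
  have := H y (mem_head _ _). case: (p1 y); case: (p2 y) => //= h; lia.
Qed.


Lemma count_pred1_uniq (T : eqType) (s : seq T) (y : T) :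
  uniq s -> y \in s -> count (pred1 y) s = 1%N.
Proof. by move=> us ys; rewrite count_uniq_mem // ys. Qed.

Lemma sq_pos (R : realFieldType) (a : R) : a != 0 -> 0 < a ^+ 2.
Proof. by move=> h; rewrite lt_def sqrf_eq0 h sqr_ge0. Qed.

Lemma sum_sq_gt0 (R : realFieldType) (a b : R) :
  (a != 0) || (b != 0) -> 0 < a ^+ 2 + b ^+ 2.
Proof.
have ha := sqr_ge0 a; have hb := sqr_ge0 b.
by case/orP => /sq_pos h; lra.
Qed.

Definition hd (R : realFieldType) (u z : point R) : R := u.1 * z.1 + u.2 * z.2.
Definition nz (R : realFieldType) (u : point R) := (u.1 != 0) || (u.2 != 0).

Lemma neq_pt (R : realFieldType) (x y : point R) :
  x != y -> (y.1 - x.1 != 0) || (y.2 - x.2 != 0).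
Proof.
case: x => x1 x2; case: y => y1 y2 /=; rewrite xpair_eqE !subr_eq0.
by rewrite negb_and eq_sym [y2 == _]eq_sym.
Qed.

Lemma tie_sign (R : realFieldType) (u x y : point R) :
  nz u -> x != y -> hd u y = hd u x ->
  exists2 s : R, s != 0 & forall z, s * orient x y z = hd u z - hd u x.
Proof.
move=> hu hxy hyx.
set K := (y.1-x.1)*u.2 - (y.2-x.2)*u.1.
set W := (y.1-x.1)^+2 + (y.2-x.2)^+2.
have hW : 0 < W by apply: sum_sq_gt0; apply: neq_pt.
have hU : 0 < u.1^+2 + u.2^+2 by apply: sum_sq_gt0.
have hK : K ^+ 2 = W * (u.1^+2 + u.2^+2).
  have : K^+2 + (hd u y - hd u x)^+2 = W * (u.1^+2 + u.2^+2) by rewrite /K /W /hd; ring.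
  by rewrite hyx subrr expr0n /= addr0.
have hK0 : K != 0.
  apply/negP => /eqP hK0; move: hK; rewrite hK0 expr0n /= => /esym/eqP.
  by rewrite mulf_eq0 !gt_eqF.
exists (K / W).
  by rewrite mulf_neq0 // invr_eq0 gt_eqF.
move=> z.
have E : K * orient x y z = W * (hd u z - hd u x)
   - ((y.1-x.1)*(z.1-x.1) + (y.2-x.2)*(z.2-x.2)) * (hd u y - hd u x).
  by rewrite /K /W /orient /hd; ring.
rewrite hyx subrr mulr0 subr0 in E.
by rewrite mulrAC E mulrAC mulfV ?gt_eqF // mul1r.
Qed.

Definition above (R : realFieldType) (P : seq (point R)) (u x : point R) : nat :=
  count (fun y => hd u x < hd u y) P.
Definition generic (R : realFieldType) (P : seq (point R)) (u : point R) :=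
  forall x y, x \in P -> y \in P -> x != y -> hd u x != hd u y.

Lemma orient_xx (R : realFieldType) (x y : point R) : orient x y x = 0.
Proof. rewrite /orient; ring. Qed.
Lemma orient_xy (R : realFieldType) (x y : point R) : orient x y y = 0.
Proof. rewrite /orient; ring. Qed.

Lemma tie_unique (R : realFieldType) (P : seq (point R)) (u x y z : point R) :
  general_position P -> nz u -> x \in P -> y \in P -> z \in P ->
  x != y -> z != x -> z != y -> hd u y = hd u x -> hd u z != hd u x.
Proof.
move=> gp hu xP yP zP xy zx zy hyx; apply/eqP => hzx.
have [s s0 hs] := tie_sign hu xy hyx.
have := hs z; rewrite hzx subrr => /eqP; rewrite mulf_eq0 (negbTE s0) /=.
by apply/negP; apply: gp; rewrite // eq_sym.
Qed.

Lemma count2 (T : eqType) (s : seq T) (x y : T) :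
  uniq s -> x \in s -> y \in s -> x != y ->
  count (fun z => (z != x) && (z != y)) s = (size s - 2)%N.
Proof.
move=> us xs ys xy.
have H := count_predC (fun z => (z == x) || (z == y)) s.
have E1 : count (fun z => (z == x) || (z == y)) s = 2%N.
  rewrite (count_split _ (fun z => z == x)).
  rewrite (@eq_in_count _ (fun z => ((z == x) || (z == y)) && (z == x)) (pred1 x)); last by move=> z _ /=; case: (z == x); case: (z == y).
  rewrite (@eq_in_count _ (fun z => ((z == x) || (z == y)) && (z != x)) (pred1 y)); last first.
    move=> z _ /=; case: (eqVneq z x) => [->|zx] /=; first by rewrite (negbTE xy).
    by rewrite andbT.
  by rewrite !count_pred1_uniq.
rewrite E1 in H.
rewrite (@eq_count _ _ (predC (fun z => (z == x) || (z == y)))); first by lia.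
by move=> z /=; rewrite negb_or.
Qed.

Lemma count_false (T : Type) (s : seq T) : count (fun _ => false) s = 0%N.
Proof. by elim: s. Qed.

Lemma count_bool_eq (T : eqType) (s : seq T) (b : bool) (y : T) :
  uniq s -> y \in s -> count (fun z => b && (z == y)) s = b.
Proof.
move=> us ys; case: b => /=; first exact: count_pred1_uniq.
exact: count_false.
Qed.

Lemma above_decomp (R : realFieldType) (P : seq (point R)) (u uc x y : point R) :
  uniq P -> x \in P -> y \in P -> x != y ->
  (forall z, z \in P -> z != x -> z != y -> (hd u x < hd u z) = (hd uc x < hd uc z)) ->
  above P u x = (nat_of_bool (hd u x < hd u y)%R +
     count (fun z => (z != x) && (z != y) && (hd uc x < hd uc z)%R) P)%N.
Proof.
move=> uP xP yP xy H; rewrite /above [in LHS](count_split _ (fun z => z == y)) /=.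
rewrite (@eq_in_count _ _ (fun z => (hd u x < hd u y) && (z == y)) P); last first.
  by move=> z _ /=; case: eqP => [->|_]; rewrite ?andbF ?andbT.
rewrite count_bool_eq //; congr (_ + _)%N.
apply: eq_in_count => z zP /=.
case: (eqVneq z x) => [->|zx]; first by rewrite ltxx.
case: (eqVneq z y) => [->|zy]; first by rewrite andbF.
by rewrite andbT H.
Qed.

Lemma half_sub2 (m : nat) : ((m + m - 2) %/ 2 = m - 1)%N.
Proof.
case: m => [//|m]. rewrite addSn addnS !subSS subn0 /=.
by rewrite subn0 addnn -muln2 mulnK.
Qed.

Lemma orient_counts (R : realFieldType) (P : seq (point R)) (uc x y : point R) (k : nat) :
  nz uc -> x != y -> hd uc y = hd uc x ->
  count (fun z => (z != x) && (z != y) && (hd uc x < hd uc z)) P = k ->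
  count (fun z => (z != x) && (z != y) && (hd uc z < hd uc x)) P = k ->
  count (fun z => 0 < orient x y z) P = k /\ count (fun z => orient x y z < 0) P = k.
Proof.
move=> hu xy tie HN HD.
have [s s0 hs] := tie_sign hu xy tie.
have pre : forall (q1 q2 : point R -> bool),
    (forall z, z != x -> z != y -> q1 z = q2 z) -> (forall z, q1 z -> (z != x) && (z != y)) ->
    count q1 P = count (fun z => (z != x) && (z != y) && q2 z) P.
  move=> q1 q2 Hq Hn; apply: eq_in_count => z _ /=.
  case: (eqVneq z x) => [ex|zx].
    by apply/negbTE/negP => /Hn; rewrite ex eqxx.
  case: (eqVneq z y) => [ey|zy].
    by apply/negbTE/negP => /Hn; rewrite ey eqxx andbF.
  by rewrite Hq.
have ox : forall z, z == x -> orient x y z = 0 by move=> z /eqP->; apply: orient_xx.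
have oy : forall z, z == y -> orient x y z = 0 by move=> z /eqP->; apply: orient_xy.
have nn : forall z, orient x y z != 0 -> (z != x) && (z != y).
  move=> z hz; apply/andP; split; apply/negP.
    by move/ox/eqP; apply/negP.
  by move/oy/eqP; apply/negP.
case: (ltgtP 0 s) => [sp|sn|s0']; last by move: s0; rewrite -s0' eqxx.
- split.
    rewrite -HN; apply: pre; first by move=> z _ _; rewrite -(pmulr_rgt0 _ sp) hs subr_gt0.
    by move=> z hz; apply: nn; rewrite gt_eqF.
  rewrite -HD; apply: pre; first by move=> z _ _; rewrite -(pmulr_rlt0 _ sp) hs subr_lt0.
  by move=> z hz; apply: nn; rewrite lt_eqF.
- split.
    rewrite -HD; apply: pre; first by move=> z _ _; rewrite -(nmulr_rlt0 _ sn) hs subr_lt0.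
    by move=> z hz; apply: nn; rewrite gt_eqF.
  rewrite -HN; apply: pre; first by move=> z _ _; rewrite -(nmulr_rgt0 _ sn) hs subr_gt0.
  by move=> z hz; apply: nn; rewrite lt_eqF.
Qed.

Definition hyp3 (R : realFieldType) (P : seq (point R)) (u0 uc u1 : point R) :=
  forall a b, a \in P -> b \in P -> a != b -> hd uc a != hd uc b ->
    (hd u0 a < hd u0 b) = (hd uc a < hd uc b) /\ (hd u1 a < hd u1 b) = (hd uc a < hd uc b).

Lemma local_swap (R : realFieldType) (P : seq (point R)) (u0 uc u1 x : point R) (m : nat) :
  uniq P -> general_position P -> generic P u0 -> generic P u1 -> nz uc ->
  hyp3 P u0 uc u1 -> size P = (m + m)%N -> x \in P ->
  (above P u0 x < m)%N -> ~~ (above P u1 x < m)%N ->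
  exists y, [/\ y \in P, hd uc y = hd uc x, (above P u1 y < m)%N,
                ~~ (above P u0 y < m)%N & halving_edge P x y].
Proof.
move=> uP gp g0 g1 nu H sP xP a0 a1.
case hasb: (has (fun y => (y != x) && (hd uc y == hd uc x)) P); last first.
  exfalso; move/negbT/hasPn: hasb => hn.
  have : above P u0 x = above P u1 x.
    apply: eq_in_count => z zP /=.
    case: (eqVneq z x) => [->|zx]; first by rewrite !ltxx.
    have nt : hd uc x != hd uc z.
      by move: (hn z zP); rewrite zx /= eq_sym.
    have xz : x != z by rewrite eq_sym.
    by have [-> ->] := H x z xP zP xz nt.
  move=> e; move: a0 a1; rewrite e; lia.
move/hasP: hasb => [y yP /andP [yx /eqP tie]].
have xy : x != y by rewrite eq_sym.
have ut : forall z, z \in P -> z != x -> z != y -> hd uc z != hd uc x.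
  by move=> z zP zx zy; apply: (tie_unique gp nu xP yP zP).
have Hx : forall u, (u = u0 \/ u = u1) -> forall z, z \in P -> z != x -> z != y ->
    (hd u x < hd u z) = (hd uc x < hd uc z).
  move=> u hu z zP zx zy.
  have nt : hd uc x != hd uc z by rewrite eq_sym ut.
  have xz : x != z by rewrite eq_sym.
  by have [h0 h1] := H x z xP zP xz nt; case: hu => ->.
have Hy : forall u, (u = u0 \/ u = u1) -> forall z, z \in P -> z != y -> z != x ->
    (hd u y < hd u z) = (hd uc y < hd uc z).
  move=> u hu z zP zy zx.
  have nt : hd uc y != hd uc z by rewrite tie eq_sym ut.
  have yz : y != z by rewrite eq_sym.
  by have [h0 h1] := H y z yP zP yz nt; case: hu => ->.
set N := count (fun z => (z != x) && (z != y) && (hd uc x < hd uc z)) P.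
have NN : count (fun z => (z != y) && (z != x) && (hd uc y < hd uc z)) P = N.
  by apply: eq_count => z /=; rewrite tie [(z != y) && _]andbC.
have ex0 := above_decomp uP xP yP xy (Hx u0 (or_introl erefl)).
have ex1 := above_decomp uP xP yP xy (Hx u1 (or_intror erefl)).
have ey0 := above_decomp uP yP xP yx (Hy u0 (or_introl erefl)).
have ey1 := above_decomp uP yP xP yx (Hy u1 (or_intror erefl)).
rewrite NN in ey0 ey1.
have gx0 := g0 x y xP yP xy; have gx1 := g1 x y xP yP xy.
move: ex0 ex1 ey0 ey1 a0 a1 gx0 gx1.
case: (ltgtP (hd u0 x) (hd u0 y)) => // h0;
case: (ltgtP (hd u1 x) (hd u1 y)) => // h1 -> -> ey0 ey1 a0 a1 _ _ /=; try lia.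
have Nm : N = (m - 1)%N by lia.
exists y; split => //; try (rewrite ?ey0 ?ey1 /=; lia).
set D := count (fun z => (z != x) && (z != y) && (hd uc z < hd uc x)) P.
have ND : (N + D = size P - 2)%N.
  rewrite -(count2 uP xP yP xy) (count_split _ (fun z => hd uc x < hd uc z)) /=.
  congr (_ + _)%N; apply: eq_in_count => z zP /=.
  case: (eqVneq z x) => [->|zx] //=; case: (eqVneq z y) => [->|zy] //=.
  have := ut z zP zx zy.
  by case: (ltgtP (hd uc x) (hd uc z)) => // ->.
have HD : D = (m - 1)%N by lia.
have [c1 c2] := @orient_counts R P uc x y (m - 1)%N nu xy tie Nm HD.
rewrite /halving_edge xP yP xy sP half_sub2 c1 c2 eqxx //.
Qed.

Definition gc (R : realFieldType) (P V : seq (point R)) (m : nat) (u : point R) :=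
  count (fun x => (x \in V) && (above P u x < m)%N) P.

Lemma hyp3_sym (R : realFieldType) (P : seq (point R)) (u0 uc u1 : point R) :
  hyp3 P u0 uc u1 -> hyp3 P u1 uc u0.
Proof. by move=> H a b aP bP ab nt; have [h1 h2] := H a b aP bP ab nt. Qed.

Lemma count_D_le (R : realFieldType) (P V : seq (point R)) (u0 uc u1 : point R) (m : nat) :
  uniq P -> general_position P -> generic P u0 -> generic P u1 -> nz uc ->
  hyp3 P u0 uc u1 -> size P = (m + m)%N ->
  (forall a b, a \in V -> halving_edge P a b -> b \in V) ->
  (count (fun x => (x \in V) && (above P u0 x < m)%N && ~~ (above P u1 x < m)%N) P <=
   count (fun x => (x \in V) && (above P u1 x < m)%N && ~~ (above P u0 x < m)%N) P)%N.
Proof.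
move=> uP gp g0 g1 nu H sP hc.
set D0 := (fun x => (x \in V) && (above P u0 x < m)%N && ~~ (above P u1 x < m)%N).
set D1 := (fun x => (x \in V) && (above P u1 x < m)%N && ~~ (above P u0 x < m)%N).
set q := fun x y => (y != x) && (hd uc y == hd uc x).
set pf := fun x => nth x P (find (q x) P).
have Hpf : forall x, x \in P -> D0 x ->
    [/\ pf x \in P, pf x != x, hd uc (pf x) = hd uc x & D1 (pf x)].
  move=> x xP /andP [/andP [xV a0] a1].
  have [y [yP tie b1 b0 he]] := local_swap uP gp g0 g1 nu H sP xP a0 a1.
  have xy : x != y by move: he => /and5P [].
  have hq : has (q x) P by apply/hasP; exists y => //; rewrite /q eq_sym xy tie eqxx.
  have qp := nth_find x hq; move: qp; rewrite /q => /andP [px /eqP tp].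
  have pP : pf x \in P by rewrite /pf mem_nth // -has_find.
  have pe : pf x = y.
    apply/eqP; apply/negP => /negP ny.
    by move: (tie_unique gp nu xP yP pP xy px ny tie); rewrite tp eqxx.
  split => //; by rewrite /D1 pe b1 b0 (hc x y xV he).
have inj : {in filter D0 P &, injective pf}.
  move=> x1 x2; rewrite !mem_filter => /andP [d1 x1P] /andP [d2 x2P] e.
  have [p1P p1x t1 _] := Hpf x1 x1P d1.
  have [p2P p2x t2 _] := Hpf x2 x2P d2.
  apply/eqP; apply/negP => /negP n12.
  have xz : x1 != pf x1 by rewrite eq_sym.
  have z2 : x2 != pf x1 by rewrite e eq_sym.
  have n21 : x2 != x1 by rewrite eq_sym.
  move: (tie_unique gp nu x1P p1P x2P xz n21 z2 t1).
  by rewrite -t1 e t2 eqxx.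
rewrite -!size_filter.
rewrite -(size_map pf).
apply: uniq_leq_size; first by rewrite map_inj_in_uniq // filter_uniq.
move=> z /mapP [x]; rewrite mem_filter => /andP [dx xP] ->.
have [pP _ _ d1] := Hpf x xP dx.
by rewrite mem_filter d1 pP.
Qed.

Lemma local_inv (R : realFieldType) (P V : seq (point R)) (u0 uc u1 : point R) (m : nat) :
  uniq P -> general_position P -> generic P u0 -> generic P u1 -> nz uc ->
  hyp3 P u0 uc u1 -> size P = (m + m)%N ->
  (forall a b, a \in V -> halving_edge P a b -> b \in V) ->
  gc P V m u0 = gc P V m u1.
Proof.
move=> uP gp g0 g1 nu H sP hc.
have l1 := count_D_le uP gp g0 g1 nu H sP hc.
have l2 := count_D_le uP gp g1 g0 nu (hyp3_sym H) sP hc.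
rewrite /gc (count_split _ (fun x => (above P u1 x < m)%N)).
rewrite [X in _ = X](count_split _ (fun x => (above P u0 x < m)%N)) /=.
have E : count (fun x => (x \in V) && (above P u0 x < m)%N && (above P u1 x < m)%N) P =
         count (fun x => (x \in V) && (above P u1 x < m)%N && (above P u0 x < m)%N) P.
  by apply: eq_count => x /=; rewrite -!andbA [(_ < m)%N && _]andbC.
rewrite E; congr (_ + _)%N; apply: anti_leq; apply/andP; split; [exact: l1 | exact: l2].
Qed.

Lemma affine_sign (R : realFieldType) (E0 E1 p c q : R) :
  p < c -> c < q ->
  E0 + p * (E1 - E0) != 0 -> E0 + q * (E1 - E0) != 0 ->
  (p < E0 / (E0 - E1) < q -> E0 / (E0 - E1) = c) ->
  E0 + c * (E1 - E0) != 0 ->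
  (0 < E0 + p * (E1 - E0)) = (0 < E0 + c * (E1 - E0)) /\
  (0 < E0 + q * (E1 - E0)) = (0 < E0 + c * (E1 - E0)).
Proof.
move=> pc cq dp dq hr dc.
case: (eqVneq E0 E1) => [<-|ne].
  by rewrite subrr !mulr0.
have K0 : E0 - E1 != 0 by rewrite subr_eq0.
set r := E0 / (E0 - E1).
have dl : forall l, E0 + l * (E1 - E0) = (E0 - E1) * (r - l).
  move=> l; rewrite /r [RHS]mulrBr mulrCA mulfV // mulr1; ring.
rewrite !dl in dp dq dc *.
have rc : r != c by apply/negP => /eqP e; move: dc; rewrite e subrr mulr0 eqxx.
have rp : r != p by apply/negP => /eqP e; move: dp; rewrite e subrr mulr0 eqxx.
have rq : r != q by apply/negP => /eqP e; move: dq; rewrite e subrr mulr0 eqxx.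
have nin : ~~ (p < r < q) by apply/negP => /hr /eqP; rewrite (negbTE rc).
case: (ltgtP r p) => [rlp|rgp|]; last by move=> e; move: rp; rewrite e eqxx.
- have h1 : r - p < 0 by rewrite subr_lt0.
  have h2 : r - c < 0 by rewrite subr_lt0; apply: lt_trans pc.
  have h3 : r - q < 0 by rewrite subr_lt0; apply: lt_trans (lt_trans pc cq).
  by rewrite !nmulr_lgt0.
- have rq' : q < r.
    case: (ltgtP r q) => // [rlq|e]; last by move: rq; rewrite e eqxx.
    by move: nin; rewrite rgp rlq.
  have h1 : 0 < r - p by rewrite subr_gt0; apply: lt_trans rq'; apply: lt_trans cq.
  have h2 : 0 < r - c by rewrite subr_gt0; apply: lt_trans rq'.
  have h3 : 0 < r - q by rewrite subr_gt0.
  by rewrite !pmulr_lgt0.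
Qed.

Definition lerp (R : realFieldType) (u0 u1 : point R) (l : R) : point R :=
  (u0.1 + l * (u1.1 - u0.1), u0.2 + l * (u1.2 - u0.2)).

Lemma dif_lerp (R : realFieldType) (u0 u1 : point R) (l : R) (a b : point R) :
  hd (lerp u0 u1 l) b - hd (lerp u0 u1 l) a =
  (hd u0 b - hd u0 a) + l * ((hd u1 b - hd u1 a) - (hd u0 b - hd u0 a)).
Proof. rewrite /hd /lerp /=; ring. Qed.

Definition crit (R : realFieldType) (u0 u1 a b : point R) : R :=
  (hd u0 b - hd u0 a) / ((hd u0 b - hd u0 a) - (hd u1 b - hd u1 a)).

Lemma lt_dif (R : realFieldType) (u a b : point R) : (hd u a < hd u b) = (0 < hd u b - hd u a).
Proof. by rewrite subr_gt0. Qed.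

Lemma neq_dif (R : realFieldType) (u a b : point R) : (hd u a != hd u b) = (hd u b - hd u a != 0).
Proof. by rewrite subr_eq0 eq_sym. Qed.

Lemma seg_hyp3 (R : realFieldType) (P : seq (point R)) (u0 u1 : point R) (p c q : R) :
  p < c -> c < q -> generic P (lerp u0 u1 p) -> generic P (lerp u0 u1 q) ->
  (forall a b, a \in P -> b \in P -> p < crit u0 u1 a b < q -> crit u0 u1 a b = c) ->
  hyp3 P (lerp u0 u1 p) (lerp u0 u1 c) (lerp u0 u1 q).
Proof.
move=> pc cq gp gq hr a b aP bP ab nt.
have dp := gp a b aP bP ab; have dq := gq a b aP bP ab.
rewrite neq_dif dif_lerp in dp; rewrite neq_dif dif_lerp in dq; rewrite neq_dif dif_lerp in nt.
rewrite !lt_dif !dif_lerp.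
by apply: affine_sign => // h; exact: (hr a b aP bP h).
Qed.

Lemma root_crit (R : realFieldType) (E0 E1 l0 l : R) :
  E0 + l0 * (E1 - E0) != 0 -> E0 + l * (E1 - E0) = 0 -> l = E0 / (E0 - E1).
Proof.
move=> h0 h.
case: (eqVneq E0 E1) => [e|ne].
  move: h0; rewrite e subrr mulr0 addr0 => h0; move: h; rewrite e subrr mulr0 addr0 => h.
  by rewrite h eqxx in h0.
have K0 : E0 - E1 != 0 by rewrite subr_eq0.
apply: (mulIf K0); rewrite divfK //.
have : l * (E1 - E0) = - E0 by apply/eqP; rewrite -subr_eq0 opprK addrC h.
move=> e; rewrite -opprB mulrN e opprK //.
Qed.

Lemma exists_delta (R : realFieldType) (s : seq R) (c : R) :
  exists2 d : R, 0 < d & forall r, r \in s -> r != c -> d < `|r - c|.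
Proof.
elim: s => [|r s [d d0 hd']]; first by exists 1 => //.
case: (eqVneq r c) => [rc|rc].
  exists d => // z; rewrite inE => /orP [/eqP -> | zs]; first by rewrite rc eqxx.
  exact: hd'.
have hr : 0 < `|r - c| by rewrite normr_gt0 subr_eq0.
case: (ltP d (`|r - c| / 2)) => h.
  exists d => // z; rewrite inE => /orP [/eqP -> _ | zs]; last exact: hd'.
  by apply: (lt_le_trans h); lra.
exists (`|r - c| / 2); first by apply: divr_gt0.
move=> z; rewrite inE => /orP [/eqP -> _ | zs zc]; first lra.
by apply: le_lt_trans h (hd' z zs zc).
Qed.

Definition crits (R : realFieldType) (P : seq (point R)) (u0 u1 : point R) : seq R :=
  [seq crit u0 u1 a b | a <- P, b <- P].

Lemma gen_point (R : realFieldType) (P : seq (point R)) (u0 u1 : point R) (l0 t : R) :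
  generic P (lerp u0 u1 l0) ->
  (forall a b, a \in P -> b \in P -> crit u0 u1 a b != t) ->
  generic P (lerp u0 u1 t).
Proof.
move=> g0 hc a b aP bP ab; apply/negP => /eqP e.
have d0 := g0 a b aP bP ab; rewrite neq_dif dif_lerp in d0.
have : hd (lerp u0 u1 t) b - hd (lerp u0 u1 t) a = 0 by rewrite e subrr.
rewrite dif_lerp => /(root_crit d0) et.
by move: (hc a b aP bP); rewrite /crit -et eqxx.
Qed.

Lemma seg_base (R : realFieldType) (P V : seq (point R)) (u0 u1 : point R) (m : nat) (l0 l1 : R) :
  uniq P -> general_position P -> size P = (m + m)%N ->
  (forall a b, a \in V -> halving_edge P a b -> b \in V) ->
  (forall l, 0 <= l -> l <= 1 -> nz (lerp u0 u1 l)) ->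
  0 <= l0 -> l0 < l1 -> l1 <= 1 ->
  generic P (lerp u0 u1 l0) -> generic P (lerp u0 u1 l1) ->
  (forall a b, a \in P -> b \in P -> ~~ (l0 < crit u0 u1 a b < l1)) ->
  gc P V m (lerp u0 u1 l0) = gc P V m (lerp u0 u1 l1).
Proof.
move=> uP gp sP hc hnz h0 h01 h1 g0 g1 hn.
set c := (l0 + l1) / 2.
have pc : l0 < c by rewrite /c; lra.
have cq : c < l1 by rewrite /c; lra.
apply: (local_inv uP gp g0 g1 (uc := lerp u0 u1 c)) => //.
  apply: hnz; rewrite /c; lra.
apply: seg_hyp3 => // a b aP bP hr.
by move: (hn a b aP bP); rewrite hr.
Qed.

Lemma seg_main (R : realFieldType) (P V : seq (point R)) (u0 u1 : point R) (m : nat) :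
  uniq P -> general_position P -> size P = (m + m)%N ->
  (forall a b, a \in V -> halving_edge P a b -> b \in V) ->
  (forall l, 0 <= l -> l <= 1 -> nz (lerp u0 u1 l)) ->
  forall (n : nat) (l0 l1 : R), 0 <= l0 -> l0 < l1 -> l1 <= 1 ->
  generic P (lerp u0 u1 l0) -> generic P (lerp u0 u1 l1) ->
  (count (fun r => (l0 < r < l1)%R) (crits P u0 u1) <= n)%N ->
  gc P V m (lerp u0 u1 l0) = gc P V m (lerp u0 u1 l1).
Proof.
move=> uP gp sP hc hnz n; elim: n => [|n IH] l0 l1 h0 h01 h1 g0 g1 hcnt.
  apply: (seg_base uP gp sP hc hnz) => // a b aP bP.
  apply/negP => hab.
  have : (0 < count (fun r => (l0 < r < l1)%R) (crits P u0 u1))%N.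
    by rewrite -has_count; apply/hasP; exists (crit u0 u1 a b) => //; apply: allpairs_f.
  lia.
case hh : (has (fun r => l0 < r < l1) (crits P u0 u1)); last first.
  apply: (seg_base uP gp sP hc hnz) => // a b aP bP.
  apply/negP => hab; move/negbT/hasPn: hh => hh.
  by move: (hh _ (allpairs_f (crit u0 u1) aP bP)); rewrite hab.
move/hasP: hh => [c cC /andP [lc cl]].
have [d d0 hd'] := exists_delta (l0 :: l1 :: crits P u0 u1) c.
have dl0 : d < c - l0.
  have := hd' l0 (mem_head _ _) (negbT (lt_eqF lc)); rewrite ltr0_norm ?subr_lt0 //; lra.
have dl1 : d < l1 - c.
  have l1in : l1 \in l0 :: l1 :: crits P u0 u1 by rewrite !inE eqxx orbT.
  have := hd' l1 l1in (negbT (gt_eqF cl)); rewrite gtr0_norm ?subr_gt0 //; lra.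
set p := c - d; set q := c + d.
have far : forall t, t \in crits P u0 u1 -> `|t - c| < d -> t = c.
  move=> t tC htd; apply/eqP; apply/negP => /negP tc.
  have tin : t \in l0 :: l1 :: crits P u0 u1 by rewrite !inE tC !orbT.
  have := hd' t tin tc; lra.
have gp' : generic P (lerp u0 u1 p).
  apply: (gen_point g0) => a b aP bP; apply/negP => /eqP e.
  have ne : p != c by rewrite /p; apply/negP => /eqP; lra.
  have pin : p \in l0 :: l1 :: crits P u0 u1 by rewrite !inE -e allpairs_f ?orbT.
  have := hd' p pin ne.
  rewrite /p addrAC subrr add0r normrN gtr0_norm //; lra.
have gq : generic P (lerp u0 u1 q).
  apply: (gen_point g0) => a b aP bP; apply/negP => /eqP e.
  have ne : q != c by rewrite /q; apply/negP => /eqP; lra.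
  have qin : q \in l0 :: l1 :: crits P u0 u1 by rewrite !inE -e allpairs_f ?orbT.
  have := hd' q qin ne.
  rewrite /q addrAC subrr add0r gtr0_norm //; lra.
have lt1 : (count (fun r => (l0 < r < p)%R) (crits P u0 u1) < count (fun r => (l0 < r < l1)%R) (crits P u0 u1))%N.
  apply: count_lt.
    by move=> r _ /andP [a1 a2]; rewrite a1 /=; rewrite /p in a2; lra.
  exists c => //; rewrite lc cl /=; apply/negP => hh; move: hh; rewrite /p; lra.
have lt2 : (count (fun r => (q < r < l1)%R) (crits P u0 u1) < count (fun r => (l0 < r < l1)%R) (crits P u0 u1))%N.
  apply: count_lt.
    by move=> r _ /andP [a1 a2]; rewrite a2 andbT; rewrite /q in a1; lra.
  exists c => //; rewrite lc cl /=; apply/negP => hh; move: hh; rewrite /q; lra.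
have e1 : gc P V m (lerp u0 u1 l0) = gc P V m (lerp u0 u1 p).
  apply: IH => //; first (rewrite /p; lra); first (rewrite /p; lra); rewrite -ltnS; apply: leq_trans hcnt; first [exact: lt1 | exact: lt2].
have e2 : gc P V m (lerp u0 u1 q) = gc P V m (lerp u0 u1 l1).
  apply: IH => //; first (rewrite /q; lra); first (rewrite /q; lra); rewrite -ltnS; apply: leq_trans hcnt; first [exact: lt1 | exact: lt2].
rewrite e1 -e2.
apply: (local_inv uP gp gp' gq (uc := lerp u0 u1 c)) => //.
  apply: hnz; lra.
have pc : p < c by rewrite /p; lra.
have cq : c < q by rewrite /q; lra.
apply: (seg_hyp3 pc cq gp' gq).
move=> a b aP bP /andP [a1 a2]; apply: far; first exact: allpairs_f.
rewrite ltr_norml; rewrite /p /q in a1 a2; apply/andP; split; lra.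
Qed.

Lemma lerp0 (R : realFieldType) (u0 u1 : point R) : lerp u0 u1 0 = u0.
Proof. by case: u0 => a b; rewrite /lerp /= !mul0r !addr0. Qed.
Lemma lerp1 (R : realFieldType) (u0 u1 : point R) : lerp u0 u1 1 = u1.
Proof. by case: u0 => a b; case: u1 => c d; rewrite /lerp /= !mul1r; congr (_, _); ring. Qed.

Lemma seg_full (R : realFieldType) (P V : seq (point R)) (u0 u1 : point R) (m : nat) :
  uniq P -> general_position P -> size P = (m + m)%N ->
  (forall a b, a \in V -> halving_edge P a b -> b \in V) ->
  (forall l, 0 <= l -> l <= 1 -> nz (lerp u0 u1 l)) ->
  generic P u0 -> generic P u1 -> gc P V m u0 = gc P V m u1.
Proof.
move=> uP gp sP hc hnz g0 g1.
have := seg_main uP gp sP hc hnz (n := size (crits P u0 u1)) (l0 := 0) (l1 := 1)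
  (lexx _) ltr01 (lexx _).
rewrite !lerp0 !lerp1; apply => //; exact: count_size.
Qed.

Definition opp_pt (R : realFieldType) (u : point R) : point R := (- u.1, - u.2).

Lemma above_opp (R : realFieldType) (P : seq (point R)) (u x : point R) :
  uniq P -> generic P u -> x \in P ->
  (above P (opp_pt u) x + above P u x = size P - 1)%N.
Proof.
move=> uP g xP.
have e1 : above P (opp_pt u) x = count (fun y => hd u y < hd u x) P.
  by apply: eq_count => y; rewrite /hd /= !mulNr -!opprD ltrN2.
have H := count_predC (pred1 x) P.
rewrite count_pred1_uniq // in H.
have e2 : count (predC (pred1 x)) P =
   (count (fun y => (hd u y < hd u x)%R) P + count (fun y => (hd u x < hd u y)%R) P)%N.
  rewrite [in LHS](count_split _ (fun y => hd u y < hd u x)) /=.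
  congr (_ + _)%N; apply: eq_in_count => y yP /=.
    case: (eqVneq y x) => [->|yx] /=; first by rewrite ltxx.
    by [].
  case: (eqVneq y x) => [->|yx] /=; first by rewrite ltxx.
  have xy : x != y by rewrite eq_sym.
  have := g x y xP yP xy.
  by case: (ltgtP (hd u x) (hd u y)).
by rewrite e1 /above -e2 -H add1n subn1.
Qed.

Lemma gc_opp (R : realFieldType) (P V : seq (point R)) (u : point R) (m : nat) :
  uniq P -> generic P u -> size P = (m + m)%N ->
  (gc P V m (opp_pt u) + gc P V m u = count (fun x => x \in V) P)%N.
Proof.
move=> uP g sP.
rewrite [RHS](count_split _ (fun x => (above P u x < m)%N)) /gc addnC; congr (_ + _)%N.
apply: eq_in_count => x xP /=; congr (_ && _).
have := above_opp uP g xP; rewrite sP.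
case: m sP => [|m] sP; first by move: xP; rewrite (size0nil sP).
lia.
Qed.

Lemma filter_perm (T : eqType) (P V : seq T) :
  uniq P -> uniq V -> (forall x, x \in V -> x \in P) -> perm_eq V (filter (fun x => x \in V) P).
Proof.
move=> uP uV sub; apply: uniq_perm => //; first exact: filter_uniq.
by move=> x; rewrite mem_filter; case xV: (x \in V) => //=; rewrite sub.
Qed.

Lemma count_V (T : eqType) (P V : seq T) :
  uniq P -> uniq V -> (forall x, x \in V -> x \in P) -> count (fun x => x \in V) P = size V.
Proof.
move=> uP uV sub; rewrite -size_filter; apply/esym/perm_size; exact: filter_perm.
Qed.

Lemma count_sub (T : eqType) (P V : seq T) (p : pred T) :
  uniq P -> uniq V -> (forall x, x \in V -> x \in P) ->
  count p V = count (fun x => p x && (x \in V)) P.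
Proof.
move=> uP uV sub; move/permP: (filter_perm uP uV sub) => ->; rewrite count_filter.
by apply: eq_count.
Qed.

Definition comb (R : realFieldType) (a b : point R) (t : R) : point R :=
  (a.1 + t * b.1, a.2 + t * b.2).

Lemma hd_comb (R : realFieldType) (a b z : point R) (t : R) :
  hd (comb a b t) z = hd a z + t * hd b z.
Proof. rewrite /hd /comb /=; ring. Qed.

Lemma exists_avoid (R : realFieldType) (s : seq R) (d : R) :
  0 < d -> exists t, [/\ 0 < t, t < d & t \notin s].
Proof.
elim: s d => [|r s IH] d d0.
  by exists (d / 2); split => //; lra.
case: (boolP ((0 < r) && (r < d))) => [/andP [r0 rd]|hr].
  have [t [t0 tr ts]] := IH r r0.
  exists t; split => //; first by apply: lt_trans rd.
  by rewrite inE negb_or ts andbT; apply/negP => /eqP e; move: tr; rewrite e ltxx.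
have [t [t0 td ts]] := IH d d0.
exists t; split => //; rewrite inE negb_or ts andbT.
by apply/negP => /eqP e; move: hr; rewrite -e t0 td.
Qed.

Lemma exists_generic (R : realFieldType) (P : seq (point R)) (a b : point R) (d : R) :
  0 < d ->
  (forall x y, x \in P -> y \in P -> x != y ->
     (hd a y - hd a x != 0) || (hd b y - hd b x != 0)) ->
  exists t, [/\ 0 < t, t < d & generic P (comb a b t)].
Proof.
move=> d0 H.
have [t [t0 td ts]] := exists_avoid
   [seq - (hd a y - hd a x) / (hd b y - hd b x) | x <- P, y <- P] d0.
exists t; split => // x y xP yP xy; apply/negP => /eqP e.
have E : (hd a y - hd a x) + t * (hd b y - hd b x) = 0.
  by move: e; rewrite !hd_comb => e; rewrite mulrBr; lra.
case: (eqVneq (hd b y - hd b x) 0) => [B0|B0].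
  by move: (H x y xP yP xy); rewrite B0 eqxx orbF -E B0 mulr0 addr0 eqxx.
have : t = - (hd a y - hd a x) / (hd b y - hd b x).
  apply: (mulIf B0); rewrite divfK //; apply/eqP; rewrite -addr_eq0 addrC E //.
move=> et; move: ts; rewrite et.
by rewrite (allpairs_f (fun x y => - (hd a y - hd a x) / (hd b y - hd b x)) xP yP).
Qed.

Lemma nz_comb2 (R : realFieldType) (u : point R) (al be : R) :
  nz u -> (al != 0) || (be != 0) -> nz (al * u.1 - be * u.2, al * u.2 + be * u.1).
Proof.
move=> hu hab; rewrite /nz /=; case: (boolP (_ != 0)) => //= /negPn/eqP e1; apply/negP => /eqP e2.
have hU := sum_sq_gt0 hu; have hA := sum_sq_gt0 hab.
have : (al * u.1 - be * u.2) ^+ 2 + (al * u.2 + be * u.1) ^+ 2 =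
       (al ^+ 2 + be ^+ 2) * (u.1 ^+ 2 + u.2 ^+ 2) by ring.
rewrite e1 e2 expr0n /= addr0 => /esym /eqP; rewrite mulf_eq0 !gt_eqF //.
Qed.

Lemma gc_sym (R : realFieldType) (P V : seq (point R)) (u : point R) (m : nat) :
  uniq P -> general_position P -> size P = (m + m)%N ->
  (forall a b, a \in V -> halving_edge P a b -> b \in V) ->
  nz u -> generic P u -> gc P V m (opp_pt u) = gc P V m u.
Proof.
move=> uP gp sP hc hu g.
set pu : point R := (- u.2, u.1).
have Hg : forall x y, x \in P -> y \in P -> x != y ->
     (hd pu y - hd pu x != 0) || (hd u y - hd u x != 0).
  move=> x y xP yP xy; apply/orP; right; rewrite -neq_dif; exact: g.
have [t [_ _ gw]] := exists_generic ltr01 Hg.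
set w := comb pu u t.
have e1 : gc P V m u = gc P V m w.
  apply: (seg_full uP gp sP hc) => // l l0 l1.
  have -> : lerp u w l = ((1 - l + l * t) * u.1 - l * u.2, (1 - l + l * t) * u.2 + l * u.1).
    by rewrite /lerp /w /comb /pu /=; congr (_, _); ring.
  apply: nz_comb2 => //; case: (eqVneq l 0) => [->|ln]; last by apply/orP; right.
  by rewrite mul0r subr0 addr0 oner_eq0.
have e2 : gc P V m w = gc P V m (opp_pt u).
  apply: (seg_full uP gp sP hc) => //; last first.
    by move=> x y xP yP xy; rewrite /hd /opp_pt /= !mulNr -!opprD eqr_opp; apply: g.
  move=> l l0 l1.
  have -> : lerp w (opp_pt u) l = (((1 - l) * t - l) * u.1 - (1 - l) * u.2,
                                   ((1 - l) * t - l) * u.2 + (1 - l) * u.1).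
    by rewrite /lerp /w /comb /pu /opp_pt /=; congr (_, _); ring.
  apply: nz_comb2 => //; case: (eqVneq (1 - l) 0) => [e|ne]; last by apply/orP; right.
  have -> : l = 1 by apply/eqP; rewrite -subr_eq0 -opprB oppr_eq0 e.
  by rewrite subrr mul0r add0r oppr_eq0 oner_eq0.
by rewrite e1 e2.
Qed.

Lemma gc_half (R : realFieldType) (P V : seq (point R)) (u : point R) (m : nat) :
  uniq P -> uniq V -> (forall x, x \in V -> x \in P) ->
  general_position P -> size P = (m + m)%N ->
  (forall a b, a \in V -> halving_edge P a b -> b \in V) ->
  nz u -> generic P u -> (gc P V m u + gc P V m u = size V)%N.
Proof.
move=> uP uV sub gp sP hc hu g.
have := gc_opp V uP g sP; rewrite (gc_sym uP gp sP hc hu g) count_V //.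
Qed.

Lemma generic_nz (R : realFieldType) (P : seq (point R)) (u x y : point R) :
  x \in P -> y \in P -> x != y -> generic P u -> nz u.
Proof.
move=> xP yP xy g; move: (g x y xP yP xy); rewrite /nz /hd.
by case: (eqVneq u.1 0) => [->|//]; case: (eqVneq u.2 0) => [->|//]; rewrite !mul0r addr0 eqxx.
Qed.

Lemma small_exists (T : eqType) (R : realFieldType) (s : seq T) (o X : T -> R) :
  (forall z, 0 <= X z) ->
  exists2 d : R, 0 < d & forall z, z \in s -> o z != 0 -> d * X z < `|o z|.
Proof.
move=> X0; elim: s => [|r s [d d0 hd']]; first by exists 1.
case: (eqVneq (o r) 0) => [or0|or0].
  exists d => // z; rewrite inE => /orP [/eqP -> | zs]; first by rewrite or0 eqxx.
  exact: hd'.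
have hr : 0 < `|o r| by rewrite normr_gt0.
have hX := X0 r.
set d2 := `|o r| / (X r + 1).
have d20 : 0 < d2 by apply: divr_gt0 => //; lra.
have d2X : d2 * X r < `|o r|.
  have : d2 * (X r + 1) = `|o r| by rewrite /d2 divfK // gt_eqF //; lra.
  rewrite mulrDr mulr1 => e; lra.
case: (ltP d d2) => h.
  exists d => // z; rewrite inE => /orP [/eqP -> _ | zs]; last exact: hd'.
  apply: le_lt_trans d2X; rewrite ler_wpM2r //; exact: ltW.
exists d2 => // z; rewrite inE => /orP [/eqP -> _ | zs zc]; first exact: d2X.
apply: le_lt_trans (hd' z zs zc); rewrite ler_wpM2r //.
Qed.

Lemma small_sign (R : realFieldType) (o X Y e : R) :
  0 < e -> 0 <= Y -> e * (`|X| + Y) < `|o| ->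
  (0 < o -> 0 < o + e * X) /\ (o < 0 -> o + e * X < 0).
Proof.
move=> e0 Y0 h.
have := ler_norml X `|X|; rewrite lexx => /esym /andP [h1 h2].
have k1 : e * (- `|X|) <= e * X by rewrite ler_pM2l.
have k2 : e * X <= e * `|X| by rewrite ler_pM2l.
have k3 : 0 <= e * Y by apply: mulr_ge0 => //; exact: ltW.
rewrite mulrDr in h; rewrite mulrN in k1.
split => ho.
  by rewrite (gtr0_norm ho) in h; lra.
by rewrite (ltr0_norm ho) in h; lra.
Qed.

Lemma edge_dir (R : realFieldType) (P : seq (point R)) (a b : point R) :
  a \in P -> b \in P -> a != b ->
  exists u, [/\ nz u, generic P u, hd u a < hd u b,
    (forall z, z \in P -> 0 < orient a b z -> hd u a < hd u z /\ hd u b < hd u z) &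
    (forall z, z \in P -> orient a b z < 0 -> hd u z < hd u a /\ hd u z < hd u b)].
Proof.
move=> aP bP ab.
set v : point R := (b.1 - a.1, b.2 - a.2).
set w : point R := (- v.2, v.1).
have ea : forall z, hd w z - hd w a = orient a b z by move=> z; rewrite /hd /w /v /orient /=; ring.
have eb : forall z, hd w z - hd w b = orient a b z by move=> z; rewrite /hd /w /v /orient /=; ring.
have [d d0 hd'] := @small_exists _ R P (fun z => orient a b z)
   (fun z => `|hd v z - hd v a| + `|hd v z - hd v b|)
   (fun z => addr_ge0 (normr_ge0 _) (normr_ge0 _)).
have vpos : 0 < v.1 ^+ 2 + v.2 ^+ 2 by apply: sum_sq_gt0; rewrite /v /=; apply: neq_pt.
have Hg : forall x y, x \in P -> y \in P -> x != y ->
     (hd w y - hd w x != 0) || (hd v y - hd v x != 0).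
  move=> x y xP yP xy; case: (boolP (hd w y - hd w x != 0)) => //= /negPn/eqP e1; apply/negP => /eqP e2.
  have f1 : (v.1 ^+ 2 + v.2 ^+ 2) * (y.1 - x.1) =
            v.1 * (hd v y - hd v x) - v.2 * (hd w y - hd w x) by rewrite /hd /w /=; ring.
  have f2 : (v.1 ^+ 2 + v.2 ^+ 2) * (y.2 - x.2) =
            v.2 * (hd v y - hd v x) + v.1 * (hd w y - hd w x) by rewrite /hd /w /=; ring.
  rewrite e1 e2 !mulr0 subr0 addr0 in f1 f2.
  move: (neq_pt xy); move/eqP: f1; move/eqP: f2.
  by rewrite !mulf_eq0 !(gt_eqF vpos) /= => /eqP -> /eqP ->; rewrite eqxx.
have [e [e0 ed ge]] := exists_generic d0 Hg.
exists (comb w v e); split => //.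
- exact: (generic_nz aP bP ab ge).
- rewrite -subr_gt0 !hd_comb.
  have -> : hd w b + e * hd v b - (hd w a + e * hd v a) =
            (hd w b - hd w a) + e * (hd v b - hd v a) by ring.
  rewrite ea orient_xy add0r; apply: mulr_gt0 => //.
  by move: vpos; rewrite /hd /v /=; congr (0 < _); ring.
- move=> z zP oz.
  have h := hd' z zP (negbT (gt_eqF oz)).
  have h' : e * (`|hd v z - hd v a| + `|hd v z - hd v b|) < `|orient a b z|.
    apply: le_lt_trans h; rewrite ler_wpM2r //; last exact: ltW.
    exact: addr_ge0 (normr_ge0 _) (normr_ge0 _).
  have [s1 _] := small_sign e0 (normr_ge0 _) h'.
  have h'' : e * (`|hd v z - hd v b| + `|hd v z - hd v a|) < `|orient a b z| by rewrite addrC.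
  have [s2 _] := small_sign e0 (normr_ge0 _) h''.
  split; rewrite -subr_gt0 !hd_comb.
    have -> : hd w z + e * hd v z - (hd w a + e * hd v a) =
              (hd w z - hd w a) + e * (hd v z - hd v a) by ring.
    by rewrite ea; apply: s1.
  have -> : hd w z + e * hd v z - (hd w b + e * hd v b) =
            (hd w z - hd w b) + e * (hd v z - hd v b) by ring.
  by rewrite eb; apply: s2.
- move=> z zP oz.
  have h := hd' z zP (negbT (lt_eqF oz)).
  have h' : e * (`|hd v z - hd v a| + `|hd v z - hd v b|) < `|orient a b z|.
    apply: le_lt_trans h; rewrite ler_wpM2r //; last exact: ltW.
    exact: addr_ge0 (normr_ge0 _) (normr_ge0 _).
  have [_ s1] := small_sign e0 (normr_ge0 _) h'.
  have h'' : e * (`|hd v z - hd v b| + `|hd v z - hd v a|) < `|orient a b z| by rewrite addrC.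
  have [_ s2] := small_sign e0 (normr_ge0 _) h''.
  split; rewrite -subr_lt0 !hd_comb.
    have -> : hd w z + e * hd v z - (hd w a + e * hd v a) =
              (hd w z - hd w a) + e * (hd v z - hd v a) by ring.
    by rewrite ea; apply: s1.
  have -> : hd w z + e * hd v z - (hd w b + e * hd v b) =
            (hd w z - hd w b) + e * (hd v z - hd v b) by ring.
  by rewrite eb; apply: s2.
Qed.

Lemma orient0_ab (R : realFieldType) (P : seq (point R)) (a b z : point R) :
  general_position P -> a \in P -> b \in P -> z \in P -> a != b ->
  orient a b z = 0 -> (z == a) || (z == b).
Proof.
move=> gp aP bP zP ab o0; apply/negPn/negP; rewrite negb_or => /andP [za zb].
by move: (gp a b z aP bP zP ab); rewrite eq_sym za eq_sym zb o0 eqxx => /(_ isT isT).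
Qed.


Lemma F1 (R : realFieldType) (P V : seq (point R)) (u a b : point R) (m : nat) :
  general_position P -> a \in P -> b \in P -> a != b ->
  hd u a < hd u b ->
  (forall z, z \in P -> 0 < orient a b z -> hd u a < hd u z /\ hd u b < hd u z) ->
  (forall z, z \in P -> orient a b z < 0 -> hd u z < hd u a /\ hd u z < hd u b) ->
  (m <= count (fun z => (0 < orient a b z)%R) P)%N ->
  (gc P V m u <= count (fun z => (0 < orient a b z)%R && (z \in V)) P)%N.
Proof.
move=> gp aP bP ab hab HL HR hm.
apply: count_le_in => x xP /andP [xV ax]; rewrite xV andbT.
apply/negPn/negP => nL.
have : (count (fun z => (0 < orient a b z)%R) P <= above P u x)%N.
  apply: count_le_in => y yP Ly.
  have [hay hby] := HL y yP Ly.
  case: (ltgtP (orient a b x) 0) => [xn|xp|x0].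
  - have [h1 _] := HR x xP xn; exact: lt_trans hay.
  - by move: nL; rewrite xp.
  - by case/orP: (orient0_ab gp aP bP xP ab x0) => /eqP ->.
lia.
Qed.

Lemma F2 (R : realFieldType) (P V : seq (point R)) (u a b : point R) (m : nat) :
  uniq P -> general_position P -> a \in P -> b \in P -> a != b ->
  hd u a < hd u b ->
  (forall z, z \in P -> 0 < orient a b z -> hd u a < hd u z /\ hd u b < hd u z) ->
  (forall z, z \in P -> orient a b z < 0 -> hd u z < hd u a /\ hd u z < hd u b) ->
  (0 < m)%N -> count (fun z => 0 < orient a b z) P = (m - 1)%N ->
  gc P V m u = (count (fun z => (0 < orient a b z)%R && (z \in V)) P + (b \in V))%N.
Proof.
move=> uP gp aP bP ab hab HL HR m0 hl.
set L := (fun z => 0 < orient a b z).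
have hl' : count L P = (m - 1)%N by exact: hl.
clear hl.
have mem : forall x, x \in P -> (above P u x < m)%N = L x || (x == b).
  move=> x xP.
  case: (ltgtP (orient a b x) 0) => [xn|xp|x0].
  - have [h1 h2] := HR x xP xn.
    have : (count L P < above P u x)%N.
      apply: count_lt.
        by move=> y yP Ly; have [hay _] := HL y yP Ly; exact: lt_trans hay.
      by exists b => //; rewrite h2 /L orient_xy ltxx.
    rewrite /L ?(lt_gtF xn) /=; case: (eqVneq x b) => [ex|_] /=; last by move=> h; apply/negbTE; rewrite -leqNgt; move: h hl'; rewrite /L; lia.
    by move: h2; rewrite ex ltxx.
  - have [h1 h2] := HL x xP xp.
    have : (above P u x < count L P)%N.
      apply: count_lt.
        move=> y yP hy; rewrite /L.
        case: (ltgtP (orient a b y) 0) => [yn|//|y0].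
          have [k1 _] := HR y yP yn.
          by have := lt_trans h1 (lt_trans hy k1); rewrite ltxx.
        case/orP: (orient0_ab gp aP bP yP ab y0) => /eqP ey; move: hy; rewrite ey.
          by move=> h; move: (lt_trans h1 h); rewrite ltxx.
        by move=> h; move: (lt_trans h2 h); rewrite ltxx.
      by exists x => //; rewrite ltxx /L xp.
    rewrite /L ?xp /= => h; move: h hl'; rewrite /L; lia.
  - case/orP: (orient0_ab gp aP bP xP ab x0) => /eqP ex; rewrite ex /L.
    + have : (count L P < above P u a)%N.
        apply: count_lt.
          by move=> y yP Ly; have [hay _] := HL y yP Ly.
        by exists b => //; rewrite hab /L orient_xy ltxx.
      rewrite orient_xx ltxx (negbTE ab) /= => h; apply/negbTE; rewrite -leqNgt; move: h hl'; rewrite /L; lia.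
    + have : above P u b = count L P.
        apply: eq_in_count => y yP; rewrite /L.
        case: (ltgtP (orient a b y) 0) => [yn|yp|y0].
        * by have [_ k2] := HR y yP yn; apply/negbTE; rewrite -leNgt ltW.
        * by have [_ k2] := HL y yP yp.
        * case/orP: (orient0_ab gp aP bP yP ab y0) => /eqP ->.
            by apply/negbTE; rewrite -leNgt ltW.
          by rewrite ltxx.
      rewrite orient_xy ltxx eqxx /= => ->; move: hl'; rewrite /L; lia.
rewrite /gc (@eq_in_count _ _ (fun x => (x \in V) && (L x || (x == b)))); last first.
  by move=> x xP /=; rewrite mem.
rewrite [in LHS](count_split _ L) /=; congr (_ + _)%N.
  by apply: eq_count => x /=; rewrite /L; case: (0 < orient a b x); rewrite ?andbT ?andbF.
rewrite -(count_bool_eq (b \in V) uP bP).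
apply: eq_in_count => x xP /=.
case: (eqVneq x b) => [->|xb]; first by rewrite /L orient_xy ltxx /= !andbT.
by rewrite orbF -andbA andbN !andbF.
Qed.

Lemma orient_swap (R : realFieldType) (a b z : point R) : orient b a z = - orient a b z.
Proof. rewrite /orient; ring. Qed.

Lemma halving_sym (R : realFieldType) (P : seq (point R)) (a b : point R) :
  halving_edge P a b = halving_edge P b a.
Proof.
rewrite /halving_edge.
have e1 : count (fun c => 0 < orient b a c) P = count (fun c => orient a b c < 0) P.
  by apply: eq_count => z; rewrite orient_swap oppr_gt0.
have e2 : count (fun c => orient b a c < 0) P = count (fun c => 0 < orient a b c) P.
  by apply: eq_count => z; rewrite orient_swap oppr_lt0.
rewrite e1 e2 eq_sym.
by case: (a \in P); case: (b \in P); case: (b != a); case: (count _ P == _); case: (count _ P == _).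
Qed.

Lemma count_lr (R : realFieldType) (Q : seq (point R)) (a b : point R) :
  uniq Q -> general_position Q -> a \in Q -> b \in Q -> a != b ->
  (count (fun z => (0 < orient a b z)%R) Q + count (fun z => (orient a b z < 0)%R) Q = size Q - 2)%N.
Proof.
move=> uQ gp aQ bQ ab.
rewrite -(count2 uQ aQ bQ ab) [RHS](count_split _ (fun z => 0 < orient a b z)) /=.
congr (_ + _)%N; apply: eq_in_count => z zQ /=.
  case: (eqVneq z a) => [->|za]; first by rewrite orient_xx ltxx.
  case: (eqVneq z b) => [->|zb]; first by rewrite orient_xy ltxx.
  by [].
case: (eqVneq z a) => [->|za]; first by rewrite orient_xx ltxx.
case: (eqVneq z b) => [->|zb]; first by rewrite orient_xy ltxx.
have := gp a b z aQ bQ zQ ab; rewrite eq_sym za eq_sym zb => /(_ isT isT).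
by case: (ltgtP (orient a b z) 0).
Qed.

Lemma gp_sub (R : realFieldType) (P V : seq (point R)) :
  general_position P -> (forall x, x \in V -> x \in P) -> general_position V.
Proof. by move=> gp sub a b c aV bV cV; apply: gp; apply: sub. Qed.

Unset Implicit Arguments.

Theorem mainTheorem6 (R : realFieldType) (P : seq (point R))
  (huniq : uniq P) (hgp : general_position P) (heven : ~~ odd (size P))
  (v : point R) (hv : v \in P) (V : seq (point R)) (huniqV : uniq V)
  (hV : forall w, w \in V <-> (w \in P /\ reachable P v w)) :
  ~~ odd (size V) /\
  (forall a b : point R,
     halving_edge V a b = [&& halving_edge P a b, a \in V & b \in V]).
Proof.
have sub : forall x, x \in V -> x \in P by move=> x /(hV x) [].
have hc : forall a b, a \in V -> halving_edge P a b -> b \in V.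
  move=> a b aV he; have [aP [p [hp hl]]] := (hV a).1 aV.
  apply/(hV b).2; split; first by case/and5P: he.
  exists (rcons p b); split; last by rewrite last_rcons.
  by rewrite rcons_path hp /= hl he.
set m := (size P)./2.
have sP : size P = (m + m)%N.
  by rewrite addnn -[LHS](odd_double_half (size P)) (negbTE heven) add0n.
clearbody m.
have vV : v \in V by apply/(hV v).2; split => //; exists [::].
have [w wP vw] : exists2 w, w \in P & v != w.
  case hh : (has (fun w => v != w) P).
    by move/hasP: hh => [w wP vw]; exists w.
  exfalso; move/negbT/hasPn: hh => hh.
  have : (size P <= size [:: v])%N.
    apply: uniq_leq_size => // x xP; rewrite inE; move: (hh x xP); rewrite negbK eq_sym.
    by [].
  have : (0 < size P)%N by case: (P) hv.
  rewrite sP /=; lia.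
have H0 : forall x y, x \in P -> y \in P -> x != y ->
     (hd (1, 0) y - hd (1, 0) x != 0) || (hd (0, 1) y - hd (0, 1) x != 0).
  move=> x y xP yP xy; have := neq_pt xy.
  by rewrite /hd /= !mul1r !mul0r !addr0 !add0r.
have [t [_ _ g0]] := exists_generic ltr01 H0.
have nz0 := generic_nz hv wP vw g0.
have half : forall u, nz u -> generic P u -> (gc P V m u + gc P V m u = size V)%N.
  by move=> u nu gu; apply: (gc_half huniq huniqV sub hgp sP hc).
have evV : ~~ odd (size V).
  by rewrite -(half _ nz0 g0) addnn odd_double.
split => //.
set k := (size V)./2.
have sV : size V = (k + k)%N.
  by rewrite addnn -[LHS](odd_double_half (size V)) (negbTE evV) add0n.
clearbody k.
have gpV := gp_sub hgp sub.
move=> a b.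
case aV: (a \in V); last by rewrite /halving_edge aV /= andbF.
case bV: (b \in V); last by rewrite /halving_edge aV bV /= andbF.
have aP := sub a aV; have bP := sub b bV.
case: (eqVneq a b) => [<-|ab]; first by rewrite /halving_edge eqxx /= !andbF.
have ba : b != a by rewrite eq_sym.
have [u1 [nz1 g1 hab1 HL1 HR1]] := edge_dir aP bP ab.
have [u2 [nz2 g2 hab2 HL2 HR2]] := edge_dir bP aP ba.
have k1 : gc P V m u1 = k by have := half u1 nz1 g1; rewrite sV !addnn => /double_inj.
have k2 : gc P V m u2 = k by have := half u2 nz2 g2; rewrite sV !addnn => /double_inj.
set lP := count (fun z => (0 < orient a b z)%R) P.
set rP := count (fun z => (0 < orient b a z)%R) P.
set lV := count (fun z => (0 < orient a b z)%R) V.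
set rV := count (fun z => (0 < orient b a z)%R) V.
have erP : count (fun z => (orient a b z < 0)%R) P = rP.
  by rewrite /rP; apply: eq_count => z; rewrite (orient_swap a b) oppr_gt0.
have erV : count (fun z => (orient a b z < 0)%R) V = rV.
  by rewrite /rV; apply: eq_count => z; rewrite (orient_swap a b) oppr_gt0.
have lrP := count_lr huniq hgp aP bP ab; rewrite erP -/lP in lrP.
have lrV := count_lr huniqV gpV aV bV ab; rewrite erV -/lV in lrV.
have clV : lV = count (fun z => (0 < orient a b z)%R && (z \in V)) P by apply: count_sub.
have crV : rV = count (fun z => (0 < orient b a z)%R && (z \in V)) P by apply: count_sub.
have m0 : (0 < m)%N.
  have : (0 < size P)%N by case: (P) hv.
  by rewrite sP; case: (m).
have k0 : (0 < k)%N.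
  have : (0 < size V)%N by case: (V) aV.
  by rewrite sV; case: (k).
rewrite /halving_edge aV bV ab aP bP sV sP !half_sub2 erP erV !andbT.
apply/idP/idP.
- move=> /and5P [_ _ _ /eqP hl /eqP hr].
  have hl' : lV = (k - 1)%N by exact: hl.
  have hr' : rV = (k - 1)%N by exact: hr.
  have hlP : (lP < m)%N.
    rewrite ltnNge; apply/negP => hm.
    have := F1 V hgp aP bP ab hab1 HL1 HR1 hm; rewrite -clV k1 => h.
    by clear -h hl' k0; lia.
  have hrP : (rP < m)%N.
    rewrite ltnNge; apply/negP => hm.
    have := F1 V hgp bP aP ba hab2 HL2 HR2 hm; rewrite -crV k2 => h.
    by clear -h hr' k0; lia.
  have e1 : lP = (m - 1)%N by clear -hlP hrP lrP sP m0; lia.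
  have e2 : rP = (m - 1)%N by clear -hlP hrP lrP sP m0; lia.
  by apply/and5P; split => //; apply/eqP; [exact: e1 | exact: e2].
- move=> /and5P [_ _ _ /eqP hl /eqP hr].
  have hl' : lP = (m - 1)%N by exact: hl.
  have hr' : rP = (m - 1)%N by exact: hr.
  have := F2 V huniq hgp aP bP ab hab1 HL1 HR1 m0 hl'; rewrite -clV k1 bV => f1.
  have := F2 V huniq hgp bP aP ba hab2 HL2 HR2 m0 hr'; rewrite -crV k2 aV => f2.
  have e1 : lV = (k - 1)%N by clear -f1 k0; lia.
  have e2 : rV = (k - 1)%N by clear -f2 k0; lia.
  by apply/and5P; split => //; apply/eqP; [exact: e1 | exact: e2].
Qed.
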